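(* Let $F$, $G$, $\Pi$ be as in the context. For every $(\omega,x)\in\Sigma_A\times I$ for which the forward Lyapunov exponent $\chi_+^G(\omega,x)$ with respect to $G$ exists, the forward Lyapunov exponent $\chi_+(\Pi(\omega,x))$ with respect to $F$ exists and $\chi_+^G(\omega,x)=\chi_+(\Pi(\omega,x))$.
   Context: $I=[0,1]$, $R(x)=1-x$. $F(\xi,p)=(\sigma(\xi),f_{\xi_0}(p))$ on $\Sigma_N\times I$, $\Sigma_N=\{1,\ldots,N\}^{\mathbb Z}$, with $f_i$ $C^1$-diffeomorphisms onto their images. $\mathcal I_P$ / $\mathcal I_R$: indices of orientation preserving / reversing $f_i$. $A=(a_{ij})_{i,j=1}^{2N}$ with $a_{ij}=1$ if ($i\in\mathcal I_P$, $j\le N$), or ($i\in\mathcal I_R$, $j>N$), or ($i-N\in\mathcal I_P$, $j>N$), or ($i-N\in\mathcal I_R$, $j\le N$), else $0$; $\Sigma_A$ the $A$-admissible sequences in $\{1,\ldots,2N\}^{\mathbb Z}$ with shift $\sigma_A$; $\pi(\omega)_n=\overline{\omega_n}$ ($\overline i=i$ for $i\le N$, $\overline i=i-N$ otherwise). $G(\omega,x)=(\sigma_A(\omega),g_{\omega_0}(x))$ with $g_i=f_i$, $g_{i+N}=R\circ f_i\circ R$ ($i\in\mathcal I_P$), $g_i=R\circ f_i$, $g_{i+N}=f_i\circ R$ ($i\in\mathcal I_R$). $C=\{\omega\colon\omega_0\le N\}$; $\Pi(\omega,x)=(\pi(\omega),x)$ if $\omega\in C$, $(\pi(\omega),R(x))$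 otherwise. Forward Lyapunov exponents: $\chi_+(\xi,p)=\lim_n\frac1n\log|(f_{\xi_{n-1}}\circ\cdots\circ f_{\xi_0})'(p)|$ and $\chi_+^G(\omega,x)=\lim_n\frac1n\log|(g_{\omega_{n-1}}\circ\cdots\circ g_{\omega_0})'(x)|$, when the limits exist. *)

(* Defs.v *)
From Stdlib Require Import Reals ZArith Arith.
From Coquelicot Require Import Coquelicot.
Open Scope R_scope.

Definition inI (x : R) : Prop := 0 <= x <= 1.
Definition Rrefl (x : R) : R := 1 - x.

Definition in_SigmaN (N : nat) (xi : Z -> nat) : Prop :=
  forall n : Z, (1 <= xi n <= N)%nat.

(* Hypotheses on f_i (i = 1..N): C^1 diffeomorphism of I onto its image in I.
   f_i is given as a real function R -> R which is C^1 on R (a C^1 extension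
   of the map on I), maps I into I, is injective on I with nonvanishing
   derivative on I. *)
Definition C1_diffeo_onto_image (h : R -> R) : Prop :=
  (forall x, inI x -> inI (h x)) /\
  (forall x, ex_derive h x) /\
  (forall x, continuous (Derive h) x) /\
  (forall x y, inI x -> inI y -> h x = h y -> x = y) /\
  (forall x, inI x -> Derive h x <> 0).

(* o i = true  means i is in I_P (f_i orientation preserving);
   o i = false means i is in I_R (f_i orientation reversing). *)
Definition orientation_spec (h : R -> R) (b : bool) : Prop :=
  if b then (forall x y, inI x -> inI y -> x < y -> h x < h y)
  else (forall x y, inI x -> inI y -> x < y -> h y < h x).

Definition adm (N : nat) (o : nat -> bool) (i j : nat) : bool :=
  if (i <=? N)%nat then
    (if o i then (j <=? N)%nat else negb (j <=? N)%nat)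
  else
    (if o (i - N)%nat then negb (j <=? N)%nat else (j <=? N)%nat).

Definition in_SigmaA (N : nat) (o : nat -> bool) (w : Z -> nat) : Prop :=
  (forall n : Z, (1 <= w n <= 2 * N)%nat) /\
  (forall n : Z, adm N o (w n) (w (n + 1)%Z) = true).

Definition bar (N : nat) (i : nat) : nat :=
  if (i <=? N)%nat then i else (i - N)%nat.

Definition piA (N : nat) (w : Z -> nat) : Z -> nat := fun n => bar N (w n).

Definition gmap (N : nat) (f : nat -> R -> R) (o : nat -> bool) (j : nat)
  : R -> R :=
  if (j <=? N)%nat then
    (if o j then f j else fun x => Rrefl (f j x))
  else
    (if o (j - N)%nat then fun x => Rrefl (f (j - N)%nat (Rrefl x))
     else fun x => f (j - N)%nat (Rrefl x)).

Definition BigPi (N : nat) (w : Z -> nat) (x : R) : (Z -> nat) * R :=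
  if (w 0%Z <=? N)%nat then (piA N w, x) else (piA N w, Rrefl x).

Fixpoint iter_fib (h : nat -> R -> R) (s : Z -> nat) (n : nat) (p : R) : R :=
  match n with
  | O => p
  | S k => h (s (Z.of_nat k)) (iter_fib h s k p)
  end.

Definition fwd_lyap_is (h : nat -> R -> R) (s : Z -> nat) (p : R) (l : R)
  : Prop :=
  is_lim_seq (fun n => ln (Rabs (Derive (iter_fib h s n) p)) / INR n) l.

(* Main.v *)
Require Import Defs.
From Stdlib Require Import Reals ZArith Arith Lia Lra.
From Coquelicot Require Import Coquelicot.
Open Scope R_scope.

Definition Rp (b : bool) (y : R) : R := if b then 1 - y else y.

Lemma Rp_inv b y : Rp b (Rp b y) = y.
Proof. destruct b; simpl; ring. Qed.

Lemma Dcase (h : R -> R) b b' x (H : forall y, ex_derive h y) :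
  Rabs (Derive (fun t => Rp b (h (Rp b' t))) x) = Rabs (Derive h (Rp b' x)).
Proof.
  destruct b, b'; simpl.
  - assert (D : is_derive (fun t => 1 - h (1 - t)) x (Derive h (1 - x))).
    { auto_derive; [apply H | change (fun x0 : R => h x0) with h; unfold Rminus; ring]. }
    replace (Derive _ x) with (Derive h (1-x)) by (symmetry; apply is_derive_unique; exact D). reflexivity.
  - assert (D : is_derive (fun t => 1 - h t) x (- Derive h x)).
    { auto_derive; [apply H | change (fun x0 : R => h x0) with h; unfold Rminus; ring]. }
    replace (Derive _ x) with (- Derive h x) by (symmetry; apply is_derive_unique; exact D). apply Rabs_Ropp.
  - assert (D : is_derive (fun t => h (1 - t)) x (- Derive h (1 - x))).
    { auto_derive; [apply H | change (fun x0 : R => h x0) with h; unfold Rminus; ring]. }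
    replace (Derive _ x) with (- Derive h (1-x)) by (symmetry; apply is_derive_unique; exact D). apply Rabs_Ropp.
  - reflexivity.
Qed.

Theorem lemma3p18 (N : nat) (f : nat -> R -> R) (o : nat -> bool)
  (Hf : forall i, (1 <= i <= N)%nat -> C1_diffeo_onto_image (f i))
  (Ho : forall i, (1 <= i <= N)%nat -> orientation_spec (f i) (o i))
  (w : Z -> nat) (x : R) (Hw : in_SigmaA N o w) (Hx : inI x) (l : R) :
  fwd_lyap_is (gmap N f o) w x l ->
  fwd_lyap_is f (fst (BigPi N w x)) (snd (BigPi N w x)) l.
Proof.
  set (e := fun k => negb (w k <=? N)%nat).
  assert (step : forall k y, gmap N f o (w k) (Rp (e k) y)
                   = Rp (e (k + 1)%Z) (f (bar N (w k)) y)).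
  { intros k y. pose proof (proj2 Hw k) as H. unfold adm in H.
    unfold e, gmap, bar, Rrefl.
    destruct (w k <=? N)%nat.
    - destruct (o (w k)); destruct (w (k+1)%Z <=? N)%nat; simpl in *;
        try discriminate; try ring.
    - destruct (o (w k - N)%nat); destruct (w (k+1)%Z <=? N)%nat; simpl in *;
        try discriminate; try (replace (1 - (1 - y)) with y by ring); try ring. }
  assert (iterE : forall n y, iter_fib (gmap N f o) w n (Rp (e 0%Z) y)
             = Rp (e (Z.of_nat n)) (iter_fib f (piA N w) n y)).
  { induction n as [|n IH]; intros y; [reflexivity|].
    simpl iter_fib. rewrite IH, step. rewrite Nat2Z.inj_succ. reflexivity. }
  assert (exd : forall n y, ex_derive (iter_fib f (piA N w) n) y).
  { induction n as [|n IH]; intros y.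
    - apply ex_derive_id.
    - simpl. apply (ex_derive_comp (f (piA N w (Z.of_nat n))) (iter_fib f (piA N w) n)).
      + assert (Hb : (1 <= piA N w (Z.of_nat n) <= N)%nat).
        { pose proof (proj1 Hw (Z.of_nat n)). unfold piA, bar.
          destruct (w (Z.of_nat n) <=? N)%nat eqn:E.
          - apply Nat.leb_le in E. lia.
          - apply Nat.leb_gt in E. lia. }
        destruct (Hf _ Hb) as [_ [Hd _]]. apply Hd.
      + apply IH. }
  assert (Hfst : fst (BigPi N w x) = piA N w) by (unfold BigPi; destruct (w 0%Z <=? N)%nat; reflexivity).
  assert (Hsnd : snd (BigPi N w x) = Rp (e 0%Z) x) by (unfold BigPi, e, Rrefl; destruct (w 0%Z <=? N)%nat; reflexivity).
  rewrite Hfst, Hsnd. unfold fwd_lyap_is. apply is_lim_seq_ext. intros n.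
  f_equal. f_equal.
  rewrite (Derive_ext (iter_fib (gmap N f o) w n)
     (fun t => Rp (e (Z.of_nat n)) (iter_fib f (piA N w) n (Rp (e 0%Z) t)))).
  - apply Dcase. apply exd.
  - intros t. rewrite <- iterE. rewrite Rp_inv. reflexivity.
Qed.
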